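(* Let $k\ge1$ and let $S_1,\dots,S_k\in\mathcal{B}_A(\mathcal{H})$. Then for every positive integer $n$, $$\omega_A^{2n}\Big(\sum_{i=1}^kS_i\Big)\le\frac{k^{2n-1}}{2}\Big\|\sum_{i=1}^k\Big(\big(S_i^{\sharp_A}S_i\big)^n+\big(S_iS_i^{\sharp_A}\big)^n\Big)\Big\|_A.$$
   Context: $\mathcal{H}$ is a complex Hilbert space with inner product $\langle\cdot,\cdot\rangle$, and $A$ is a fixed nonzero positive bounded operator on $\mathcal{H}$. Set $\langle x,y\rangle_A=\langle Ax,y\rangle$ and $\|x\|_A=\|A^{1/2}x\|$. $\mathcal{B}_A(\mathcal{H})$ is the set of bounded operators $T$ for which there exists a bounded $S$ with $\langle Tx,y\rangle_A=\langle x,Sy\rangle_A$ for all $x,y$ (equivalently $\mathcal{R}(T^*A)\subseteq\mathcal{R}(A)$). For $T\in\mathcal{B}_A(\mathcal{H})$, $T^{\sharp_A}=A^\dagger T^*A$ ($A^\dagger$ the Moore–Penrose inverse) is the reduced solution of $AX=T^*A$. For an operator $T$ with $\|Tx\|_A\le\lambda\|x\|_A$ for some $\lambda>0$ and all $x$, $\|T\|_A=\sup\{\|Tx\|_A: \|x\|_A=1\}$, and $\omega_A(T)=\sup\{|\langle Tx,x\rangle_A|:\|x\|_A=1\}$. *)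

(* Defs.v *)
From HB Require Import structures.
From mathcomp Require Import all_boot all_order all_algebra.
From mathcomp Require Import complex.
From mathcomp Require Import classical_sets reals.
Set Implicit Arguments. Unset Strict Implicit. Unset Printing Implicit Defensive.
Import Order.TTheory GRing.Theory Num.Theory.
Local Open Scope ring_scope.
Local Open Scope complex_scope.

Record HilbertSpace (R : realType) := {
  Hcar :> lmodType R[i];
  inner : Hcar -> Hcar -> R[i];
  inner_linear : forall (a : R[i]) (x y z : Hcar),
      inner (a *: x + y) z = a * inner x z + inner y z;
  inner_conj : forall x y : Hcar, inner y x = (inner x y)^*;
  inner_pos : forall x : Hcar, complex.Im (inner x x) = 0 /\ 0 <= complex.Re (inner x x);
  inner_def : forall x : Hcar, inner x x = 0 -> x = 0;
  inner_complete : forall u : nat -> Hcar,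
      (forall e : R, 0 < e -> exists N : nat, forall m p : nat, (N <= m)%N -> (N <= p)%N ->
          Num.sqrt (complex.Re (inner (u m - u p) (u m - u p))) < e) ->
      exists l : Hcar, forall e : R, 0 < e -> exists N : nat, forall m : nat, (N <= m)%N ->
          Num.sqrt (complex.Re (inner (u m - l) (u m - l))) < e
}.

Section Ops.
Variable R : realType.
Variable H : HilbertSpace R.

Definition hnorm (x : H) : R := Num.sqrt (complex.Re (inner x x)).

Definition is_linear (T : H -> H) :=
  forall (a : R[i]) (x y : H), T (a *: x + y) = a *: T x + T y.

Definition bounded (T : H -> H) :=
  is_linear T /\ exists M : R, forall x, hnorm (T x) <= M * hnorm x.

Definition positive_op (A : H -> H) :=
  bounded A /\ forall x, complex.Im (inner (A x) x) = 0 /\ 0 <= complex.Re (inner (A x) x).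

Definition innerA (A : H -> H) (x y : H) : R[i] := inner (A x) y.

(* ||x||_A = ||A^{1/2} x|| = sqrt <Ax,x> *)
Definition normA (A : H -> H) (x : H) : R := Num.sqrt (complex.Re (inner (A x) x)).

Definition in_BA (A T : H -> H) :=
  bounded T /\ exists S, bounded S /\ forall x y, innerA A (T x) y = innerA A x (S y).

Definition is_adjoint (T Ts : H -> H) := forall x y, inner (T x) y = inner x (Ts y).

Definition in_closure_range (A : H -> H) (v : H) :=
  forall e : R, 0 < e -> exists z, hnorm (v - A z) < e.

(* X = T^{#_A}: the reduced solution of A X = T^* A, i.e. the (unique) bounded
   solution X of A X = T^* A with range contained in the closure of R(A);
   this is A^dagger T^* A (Douglas' theorem). *)
Definition is_sharpA (A T X : H -> H) :=
  bounded X /\ exists Ts, bounded Ts /\ is_adjoint T Ts /\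
    (forall x, A (X x) = Ts (A x)) /\ (forall y, in_closure_range A (X y)).

Definition opnormA (A T : H -> H) : R :=
  sup [set r : R | exists x, normA A x = 1 /\ r = normA A (T x)].

Definition numradA (A T : H -> H) : R :=
  sup [set r : R | exists x, normA A x = 1 /\ r = Normc.normc (innerA A (T x) x)].

End Ops.

(* Main.v *)
Require Import Defs.
From HB Require Import structures.
From mathcomp Require Import all_boot all_order all_algebra.
From mathcomp Require Import complex.
From mathcomp Require Import classical_sets reals.
From mathcomp Require Import boolp ring lra.
Import Order.TTheory GRing.Theory Num.Theory.
Local Open Scope ring_scope.


Section RealLem.
Variable R : realType.

Lemma bern (e : R) m : 0 <= e -> 1 + m%:R * e <= (1 + e) ^+ m.
Proof.
move=> e0; elim: m => [|m IH]; first by rewrite mul0r addr0 expr0.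
rewrite exprS; apply: le_trans (ler_wpM2l _ IH); last lra.
have := ler0n R m; rewrite -natr1; nra.
Qed.

Lemma bern2 (s d : R) m : 0 <= d -> d <= s ->
  s ^+ m.+1 - m.+1%:R * d * s ^+ m <= (s - d) ^+ m.+1.
Proof.
move=> d0 ds; elim: m => [|m IH]; first by rewrite !expr1 expr0; lra.
rewrite [(s - d) ^+ _]exprS.
have sd : 0 <= s - d by lra.
apply: le_trans (ler_wpM2l sd IH).
have sm : 0 <= s ^+ m by apply: exprn_ge0; lra.
have e : (m.+2%:R : R) = m.+1%:R + 1 by rewrite -natr1.
rewrite e !exprS; set M := (m.+1%:R : R); set u := s ^+ m.
have := mulr_ge0 (mulr_ge0 (ler0n R m.+1) (sqr_ge0 d)) sm.
rewrite -/M -/u => h; nra.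
Qed.

Lemma sup_pow_le (E : set R) C m : (0 < m)%N -> 0 <= C ->
  (forall r, E r -> 0 <= r /\ r ^+ m <= C) -> sup E ^+ m <= C.
Proof.
move=> m0 C0 hE.
have [hs|hs] := pselect (has_sup E); last first.
  by rewrite sup_out // expr0n gtn_eqF.
have [[r0 Er0] _] := hs.
have s0 : 0 <= sup E by apply: le_trans (proj1 (hE _ Er0)) (sup_upper_bound hs Er0).
rewrite leNgt; apply/negP => hC.
set s := sup E in s0 hC.
case: m m0 hE hC => // m _ hE hC.
have sp : 0 < s.
  rewrite lt_def s0 andbT; apply/negP => /eqP s00; move: hC.
  by rewrite s00 expr0n /=; lra.
have smp : 0 < s ^+ m by apply: exprn_gt0.
set d := Order.min s ((s ^+ m.+1 - C) / (m.+1%:R * s ^+ m)).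
have dpos : 0 < d.
  rewrite /d lt_min sp /=; apply: divr_gt0; first lra.
  by apply: mulr_gt0 => //; rewrite ltr0n.
have ds : d <= s by rewrite /d ge_min lexx.
have d2 : d * (m.+1%:R * s ^+ m) <= s ^+ m.+1 - C.
  rewrite -ler_pdivlMr; last by apply: mulr_gt0 => //; rewrite ltr0n.
  by rewrite /d ge_min lexx orbT.
have key := @bern2 s d m (ltW dpos) ds.
have sdlt : s - d < sup E by rewrite -/s; lra.
have [y Ey hy] := sup_gt (ex_intro _ r0 Er0) sdlt.
have [y0 yC] := hE _ Ey.
have : (s - d) ^+ m.+1 < y ^+ m.+1.
  by rewrite ltrXn2r //; lra.
nra.
Qed.

Lemma grow_bound (t : nat -> R) N c B : 0 < N -> 0 < c ->
  (forall j, 0 <= t j) -> (forall j, t j ^+ 2 <= t j.+1 * N) ->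
  (forall j, t j <= B * c ^+ (2 ^ j)) -> t 0%N <= c * N.
Proof.
move=> N0 c0 t0 tsq tB.
have claim : forall j, t 0%N ^+ (2 ^ j) * N <= t j * N ^+ (2 ^ j).
  elim=> [|j IH]; first by rewrite expn0 !expr1.
  have h1 : 0 <= t 0%N ^+ (2 ^ j) * N by apply: mulr_ge0; [apply: exprn_ge0|lra].
  have h2 : (t 0%N ^+ (2 ^ j) * N) ^+ 2 <= (t j * N ^+ (2 ^ j)) ^+ 2.
    by apply: lerXn2r; rewrite ?nnegrE //; apply: le_trans IH.
  rewrite expnS mulnC !exprM.
  have hN : 0 < N ^+ (2 ^ j) by apply: exprn_gt0.
  have := tsq j.
  move: h2; rewrite !exprMn.
  set a := t 0%N ^+ (2 ^ j); set b := N ^+ (2 ^ j).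
  move=> h2 h3.
  have hb2 : 0 < b ^+ 2 by apply: exprn_gt0.
  rewrite -(ler_pM2r N0).
  have h5 : 0 <= t j.+1 * N - t j ^+ 2 by lra.
  have h4 := mulr_ge0 (ltW hb2) h5.
  nra.
rewrite leNgt; apply/negP => hlt.
have cN : 0 < c * N by apply: mulr_gt0.
set rho := t 0%N / (c * N).
have rho1 : 1 < rho by rewrite /rho ltr_pdivlMr // mul1r.
have bnd : forall j, rho ^+ (2 ^ j) * N <= B.
  move=> j; have := claim j; have := tB j => h1 h2.
  have h3 : t 0%N ^+ (2 ^ j) * N <= B * (c * N) ^+ (2 ^ j).
    apply: le_trans h2 _; rewrite exprMn mulrA; apply: ler_wpM2r.
      by apply: exprn_ge0; lra.
    done.
  rewrite /rho expr_div_n.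
  have hp : 0 < (c * N) ^+ (2 ^ j) by apply: exprn_gt0.
  by rewrite mulrAC ler_pdivrMr.
set K := B / (N * (rho - 1)).
have K0 : 0 <= K.
  rewrite /K divr_ge0 //; last by apply: mulr_ge0; lra.
  have := bnd 0%N; rewrite expn0 expr1 => h; nra.
have := archi_boundP K0; set j := Num.bound K => hj.
have := bnd j.
have b1 := bern (rho - 1) (2 ^ j) (ltac:(lra)).
have jj : (j%:R : R) <= (2 ^ j)%N%:R by rewrite ler_nat ltnW // ltn_expl.
have e1 : 1 + (rho - 1) = rho by ring.
rewrite e1 in b1.
have : B < j%:R * (N * (rho - 1)).
  by rewrite -ltr_pdivrMr // mulr_gt0 //; lra.
set P := ((2 ^ j)%N%:R : R) in b1 jj.
set X := rho ^+ (2 ^ j) in b1 *.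
have r1 : 0 < rho - 1 by lra.
have g1 := ler_wpM2r (ltW N0) b1.
have g2 := ler_wpM2r (ltW (mulr_gt0 N0 r1)) jj.
nra.
Qed.

Lemma mcc_real (m : nat -> R) : m 0%N = 1 -> (forall j, 0 <= m j) ->
  (forall j, m j.+1 ^+ 2 <= m j * m j.+2) -> forall n, m 1%N ^+ n <= m n.
Proof.
move=> m0 mpos lc.
have C : forall j, m 1%N * m j <= m j.+1.
  elim=> [|j IH]; first by rewrite m0 mulr1.
  have h1 := mpos 1%N; have h2 := mpos j; have h3 := mpos j.+1; have h4 := mpos j.+2.
  have h5 := lc j.
  have [z|nz] := eqVneq (m j.+1) 0; first by rewrite z mulr0.
  have p : 0 < m j.+1 by rewrite lt_def nz h3.
  rewrite -(ler_pM2r p).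
  have h6 := ler_wpM2r h4 IH.
  have h7 := ler_wpM2l h1 h5.
  nra.
elim=> [|n IH]; first by rewrite expr0 m0.
rewrite exprS; apply: le_trans (C n); apply: ler_wpM2l => //.
Qed.

End RealLem.

Set Implicit Arguments. Unset Strict Implicit.

Section Form.
Local Open Scope complex_scope.
Variable R : rcfType.
Variable V : lmodType R[i].
Variable F : V -> V -> R[i].
Hypothesis Flin : forall (a : R[i]) x y z, F (a *: x + y) z = a * F x z + F y z.
Hypothesis Fherm : forall x y, F y x = conjc (F x y).
Hypothesis Fpos : forall x, 0 <= complex.Re (F x x).

Lemma F0l z : F 0 z = 0.
Proof.
have := Flin 1 0 0 z; rewrite scaler0 addr0 mul1r => h.
by apply: (@addrI _ (F 0 z)); rewrite addr0 -h.
Qed.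

Lemma FDl x y z : F (x + y) z = F x z + F y z.
Proof. by rewrite -[x]scale1r Flin mul1r scale1r. Qed.

Lemma FZl a x z : F (a *: x) z = a * F x z.
Proof. by rewrite -[a *: x]addr0 Flin F0l addr0. Qed.

Lemma Flin2 a x y z : F z (a *: x + y) = conjc a * F z x + F z y.
Proof.
rewrite Fherm Flin (Fherm x z) (Fherm y z).
case: a => a1 a2; case: (F x z) => b1 b2; case: (F y z) => c1 c2.
simpc; congr (_ +i* _); ring.
Qed.

Lemma FimR x : complex.Im (F x x) = 0.
Proof.
have := Fherm x x; case: (F x x) => a b /= /(congr1 (@complex.Im _)) /= h.
lra.
Qed.

Lemma FCS x y : Normc.normc (F x y) ^+ 2 <= complex.Re (F x x) * complex.Re (F y y).
Proof.
have key : forall c : R[i], 0 <= complex.Re (F (c *: y + x) (c *: y + x)).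
  by move=> c; apply: Fpos.
have E : forall c : R[i], F (c *: y + x) (c *: y + x) =
    c * (conjc c * F y y + conjc (F x y)) + (conjc c * F x y + F x x).
  move=> c; rewrite Flin !Flin2; congr (_ * (_ + _) + _).
  by rewrite -Fherm.
have hx := FimR x; have hy := FimR y.
have px := Fpos x; have py := Fpos y.
move: key E hx hy px py; case: (F x x) => a a'; case: (F y y) => b b'.
case: (F x y) => p r /= key E ha hb px py; subst a' b'.
have Q : forall t : R, 0 <= a - 2 * t * (p ^+ 2 + r ^+ 2) + t ^+ 2 * (p ^+ 2 + r ^+ 2) * b.
  move=> t; have := key ((- t * p) +i* (- t * r)); rewrite E /=.
  move=> h; nra.
rewrite sqr_sqrtr ?addr_ge0 ?sqr_ge0 //.
set s := p ^+ 2 + r ^+ 2.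
have s0 : 0 <= s by rewrite /s addr_ge0 ?sqr_ge0.
have [b0|bpos] := eqVneq b 0.
  subst b; rewrite mulr0; rewrite le_eqVlt in s0; case/orP: s0 => [/eqP <-//|s0].
  have := Q ((a + 1) / (2 * s)); rewrite mulr0 addr0.
  have -> : 2 * ((a + 1) / (2 * s)) * s = a + 1 by field; rewrite gt_eqF.
  lra.
have bp : 0 < b by rewrite lt_def bpos py.
have := Q (1 / b).
have -> : a - 2 * (1 / b) * s + (1 / b) ^+ 2 * s * b = a - s / b by field; rewrite gt_eqF.
move=> h; have : s / b <= a by lra.
by rewrite ler_pdivrMr // mulrC.
Qed.


Lemma Re_le_normc (z : R[i]) : complex.Re z <= Normc.normc z.
Proof.
case: z => a b /=; apply: le_trans (ler_norm a) _; rewrite -sqrtr_sqr.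
rewrite ler_sqrt ?addr_ge0 ?sqr_ge0 //; have := sqr_ge0 b; lra.
Qed.

Lemma normc_ge0 (z : R[i]) : 0 <= Normc.normc z.
Proof. by case: z => a b /=; apply: sqrtr_ge0. Qed.

Lemma FCS' x y : Normc.normc (F x y) <=
  Num.sqrt (complex.Re (F x x)) * Num.sqrt (complex.Re (F y y)).
Proof.
have h := FCS x y.
rewrite -ler_sqr ?nnegrE ?normc_ge0 ?mulr_ge0 ?sqrtr_ge0 //.
by rewrite exprMn !sqr_sqrtr.
Qed.

Lemma FreCS x y : complex.Re (F x y) <=
  Num.sqrt (complex.Re (F x x)) * Num.sqrt (complex.Re (F y y)).
Proof. exact: le_trans (Re_le_normc _) (FCS' x y). Qed.

Lemma Ftri x y : Num.sqrt (complex.Re (F (x + y) (x + y))) <=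
  Num.sqrt (complex.Re (F x x)) + Num.sqrt (complex.Re (F y y)).
Proof.
have E : complex.Re (F (x + y) (x + y)) =
   complex.Re (F x x) + complex.Re (F y y) + 2 * complex.Re (F x y).
  have L : forall z, F z (x + y) = F z x + F z y.
    by move=> z; rewrite -[X in F z (X + y)]scale1r Flin2 conjc1 mul1r.
  rewrite FDl !L (Fherm x y).
  by case: (F x x) => ? ?; case: (F y y) => ? ?; case: (F x y) => ? ? /=; ring.
have h := FreCS x y.
have hx := Fpos x; have hy := Fpos y.
have su := sqr_sqrtr hx; have sv := sqr_sqrtr hy.
have u0 := sqrtr_ge0 (complex.Re (F x x)); have v0 := sqrtr_ge0 (complex.Re (F y y)).
set u := Num.sqrt _ in h su u0 *; set v := Num.sqrt (complex.Re (F y y)) in h sv v0 *.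
rewrite -[u + v]ger0_norm ?addr_ge0 // -sqrtr_sqr ler_sqrt ?sqr_ge0 // E.
nra.
Qed.

End Form.

Section Polar.
Local Open Scope complex_scope.
Variable R : rcfType.
Variable V : lmodType R[i].
Variable F : V -> V -> R[i].
Hypothesis Flin : forall (a : R[i]) x y z, F (a *: x + y) z = a * F x z + F y z.
Hypothesis Flin2 : forall (a : R[i]) x y z, F z (a *: x + y) = conjc a * F z x + F z y.
Hypothesis Fim : forall x, complex.Im (F x x) = 0.

Lemma polar x y : F y x = conjc (F x y).
Proof.
have E : forall a : R[i], F (a *: y + x) (a *: y + x) =
    a * (conjc a * F y y + F y x) + (conjc a * F x y + F x x).
  by move=> a; rewrite Flin !Flin2.
have h1 := Fim (1 *: y + x); have h2 := Fim ('i *: y + x).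
rewrite E in h1; rewrite E in h2.
have hx := Fim x; have hy := Fim y.
move: h1 h2 hx hy; case: (F x x) => a1 a2; case: (F y y) => b1 b2.
case: (F y x) => c1 c2; case: (F x y) => d1 d2 /= h1 h2 hx hy.
subst a2 b2; congr (_ +i* _); lra.
Qed.

End Polar.

Section PowerMean.
Variable R : realFieldType.

Lemma cheb k (a : 'I_k -> R) p : (forall i, 0 <= a i) ->
  (\sum_i a i) * (\sum_i a i ^+ p) <= k%:R * \sum_i a i ^+ p.+1.
Proof.
move=> a0.
have pw : forall i j, a i * a j ^+ p + a j * a i ^+ p <= a i ^+ p.+1 + a j ^+ p.+1.
  move=> i j; have ai := a0 i; have aj := a0 j.
  have : 0 <= (a i - a j) * (a i ^+ p - a j ^+ p).
    have [h|h] := leP (a i) (a j).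
      have : a i ^+ p <= a j ^+ p by apply: lerXn2r.
      nra.
    have : a j ^+ p <= a i ^+ p by apply: lerXn2r; rewrite ?nnegrE //; exact: ltW.
    nra.
  rewrite !exprS; nra.
have S : \sum_(i < k) \sum_(j < k) (a i * a j ^+ p + a j * a i ^+ p) <=
         \sum_(i < k) \sum_(j < k) (a i ^+ p.+1 + a j ^+ p.+1).
  by apply: ler_sum => i _; apply: ler_sum => j _; exact: pw.
move: S; under eq_bigr => i _ do rewrite big_split /=.
under [X in _ <= X]eq_bigr => i _ do rewrite big_split /=.
rewrite !big_split /= [X in _ + X <= _]exchange_big [X in _ <= _ + X]exchange_big /= => S.
rewrite big_distrl /=.
under eq_bigr do rewrite big_distrr /=.
have -> : k%:R * \sum_i a i ^+ p.+1 = \sum_(i < k) \sum_(j < k) a i ^+ p.+1.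
  rewrite big_distrr /=; apply: eq_bigr => i _.
  by rewrite sumr_const card_ord mulr_natl.
lra.
Qed.

Lemma power_mean k (a : 'I_k -> R) m : (forall i, 0 <= a i) ->
  (\sum_i a i) ^+ m.+1 <= k%:R ^+ m * \sum_i a i ^+ m.+1.
Proof.
move=> a0; elim: m => [|m IH]; first by rewrite expr0 mul1r expr1; apply: ler_sum => i _; rewrite expr1.
have s0 : 0 <= \sum_i a i by apply: sumr_ge0.
have h := ler_wpM2l s0 IH.
rewrite exprS; apply: (le_trans h).
rewrite mulrCA exprS (mulrC k%:R) -mulrA.
apply: ler_wpM2l; first by apply: exprn_ge0.
exact: cheb.
Qed.

End PowerMean.


Section Main.
Local Open Scope complex_scope.
Variable R : realType.
Variable H : HilbertSpace R.
Variable A : H -> H.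
Hypothesis hA : positive_op A.

Local Notation f := (innerA A).
Local Notation q x := (complex.Re (innerA A x x)).
Local Notation nA := (normA A).

Lemma iCS' (x y : H) : Normc.normc (inner x y) <= hnorm x * hnorm y.
Proof. exact (FCS' (@inner_linear _ H) (@inner_conj _ H) (fun x => proj2 (inner_pos x)) x y). Qed.

Lemma Alin : is_linear A. Proof. by case: hA => [[]]. Qed.
Lemma AD x y : A (x + y) = A x + A y.
Proof. by have := Alin 1 x y; rewrite !scale1r. Qed.
Lemma A0 : A 0 = 0.
Proof. by apply: (@addrI _ (A 0)); rewrite -AD !addr0. Qed.

Lemma fl (a : R[i]) x y z : f (a *: x + y) z = a * f x z + f y z.
Proof. rewrite /innerA (Alin a x y); exact (inner_linear _ _ _ _). Qed.
Lemma fl2 (a : R[i]) x y z : f z (a *: x + y) = conjc a * f z x + f z y.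
Proof. exact (Flin2 (@inner_linear _ H) (@inner_conj _ H) a x y (A z)). Qed.
Lemma fim x : complex.Im (f x x) = 0.
Proof. by case: hA => _ /(_ x) []. Qed.
Lemma fpos x : 0 <= q x.
Proof. by case: hA => _ /(_ x) []. Qed.
Lemma fherm x y : f y x = conjc (f x y).
Proof. exact (polar fl fl2 fim x y). Qed.
Lemma fD x y z : f (x + y) z = f x z + f y z.
Proof. exact (FDl fl x y z). Qed.
Lemma f0 z : f 0 z = 0.
Proof. exact (F0l fl z). Qed.
Lemma fCS' x y : Normc.normc (f x y) <= nA x * nA y.
Proof. exact (FCS' fl fherm fpos x y). Qed.
Lemma fReCS x y : complex.Re (f x y) <= nA x * nA y.
Proof. exact (FreCS fl fherm fpos x y). Qed.
Lemma nAtri x y : nA (x + y) <= nA x + nA y.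
Proof. exact (Ftri fl fherm fpos x y). Qed.
Lemma nA0 : nA 0 = 0.
Proof. by rewrite /normA -/(innerA A 0 0) f0 sqrtr0. Qed.
Lemma nA_ge0 x : 0 <= nA x.
Proof. exact: sqrtr_ge0. Qed.
Lemma nA_sq x : nA x ^+ 2 = q x.
Proof. by rewrite sqr_sqrtr // fpos. Qed.

Lemma fsum (I : Type) (r : seq I) (P : pred I) (g : I -> H) z :
  f (\sum_(i <- r | P i) g i) z = \sum_(i <- r | P i) f (g i) z.
Proof. by apply: (big_morph (fun u => f u z)); [move=> u1 u2; exact (fD u1 u2 z) | exact (f0 z)]. Qed.

Lemma nAsum (I : Type) (r : seq I) (P : pred I) (g : I -> H) :
  nA (\sum_(i <- r | P i) g i) <= \sum_(i <- r | P i) nA (g i).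
Proof.
elim/big_rec2: _; first by rewrite nA0.
by move=> i y1 y2 _ h; apply: le_trans (nAtri _ _) _; rewrite lerD2l.
Qed.

Lemma nA_hnorm : exists K, 0 <= K /\ forall y, nA y <= K * hnorm y.
Proof.
case: hA => [[_ [M hM]] _].
exists (Num.sqrt `|M|); split; first exact: sqrtr_ge0.
move=> y.
have h1 : q y <= `|M| * hnorm y ^+ 2.
  apply: le_trans (Re_le_normc _) _; apply: le_trans (iCS' _ _) _.
  have hy : 0 <= hnorm y by apply: sqrtr_ge0.
  apply: le_trans (ler_wpM2r hy (hM y)) _.
  rewrite expr2 mulrA; apply: ler_wpM2r => //; apply: ler_wpM2r => //.
  exact: ler_norm.
rewrite -ler_sqr ?nnegrE ?nA_ge0 ?mulr_ge0 ?sqrtr_ge0 //.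
by rewrite nA_sq exprMn sqr_sqrtr.
Qed.

Lemma iter_adj (Q : H -> H) (hQ : forall u v, f (Q u) v = f u (Q v)) a b u v :
  f (iter a Q u) (iter b Q v) = f (iter (b + a) Q u) v.
Proof.
elim: b a => [|b IH] a //=.
by rewrite -hQ -iterS IH addnS.
Qed.

Lemma abound (Q : H -> H) :
  (exists M, forall x, hnorm (Q x) <= M * hnorm x) ->
  (forall u v, f (Q u) v = f u (Q v)) ->
  exists c, 0 < c /\ forall x, nA (Q x) <= c * nA x.
Proof.
move=> [M hM] hQ.
have [K [K0 hK]] := nA_hnorm.
exists (`|M| + 1); split; first by have := normr_ge0 M; lra.
set c := `|M| + 1.
have hc : forall x, hnorm (Q x) <= c * hnorm x.
  move=> x; apply: le_trans (hM x) _; apply: ler_wpM2r; first exact: sqrtr_ge0.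
  by have := ler_norm M; rewrite /c; lra.
have c0 : 0 < c by have := normr_ge0 M; rewrite /c; lra.
have hit : forall m x, hnorm (iter m Q x) <= c ^+ m * hnorm x.
  elim=> [|m IH] x /=; first by rewrite expr0 mul1r.
  apply: le_trans (hc _) _; rewrite exprS -mulrA; apply: ler_wpM2l => //.
  exact: ltW.
have sq : forall a x, nA (iter a Q x) ^+ 2 <= nA (iter (a + a) Q x) * nA x.
  move=> a x; rewrite nA_sq -[iter (a + a) Q x]/(iter (a + a) Q x).
  by rewrite iter_adj //; apply: fReCS.
move=> x.
have [N0|Np] := eqVneq (nA x) 0.
  rewrite N0 mulr0.
  have := sq 1%N x; rewrite N0 mulr0 /= => h.
  have : nA (Q x) ^+ 2 = 0 by apply/le_anti; rewrite h sqr_ge0.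
  by move/eqP; rewrite expf_eq0 /= => /eqP ->.
have Npos : 0 < nA x by rewrite lt_def Np nA_ge0.
have := @grow_bound R (fun j => nA (iter (2 ^ j) Q x)) (nA x) c (K * hnorm x) Npos c0.
apply.
- by move=> j; apply: nA_ge0.
- by move=> j; rewrite expnS mul2n -addnn; apply: sq.
- move=> j; apply: le_trans (hK _) _.
  rewrite -mulrA; apply: ler_wpM2l => //; rewrite mulrC; exact: hit.
Qed.

Section Pair.
Variables X Y : H -> H.
Hypothesis Xlin : is_linear X.
Hypothesis Ylin : is_linear Y.
Hypothesis hXY : forall u v, f (X u) v = f u (Y v).
Hypothesis hYX : forall u v, f (Y u) v = f u (X v).

Local Notation P := (X \o Y).

Lemma Psa u v : f (P u) v = f u (P v).
Proof. by rewrite /= hXY hYX. Qed.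

Lemma Plin : is_linear P.
Proof. by move=> a u v /=; rewrite Ylin Xlin. Qed.

Lemma gl (a : R[i]) u v z : f (P (a *: u + v)) z = a * f (P u) z + f (P v) z.
Proof. by rewrite Plin fl. Qed.

Lemma gherm u v : f (P v) u = conjc (f (P u) v).
Proof. by rewrite Psa fherm. Qed.

Lemma gpos u : 0 <= complex.Re (f (P u) u).
Proof. by rewrite /= hXY fpos. Qed.

Lemma iterP a u : iter a.+1 P u = P (iter a P u).
Proof. by []. Qed.

Lemma mcc x n : q x = 1 -> q (Y x) ^+ n <= complex.Re (f (iter n P x) x).
Proof.
move=> qx.
set m := fun j => complex.Re (f (iter j P x) x).
have ev : forall c, m (c + c)%N = q (iter c P x).
  by move=> c; rewrite /m (@iter_adj P Psa).
have od : forall c, m (c + c).+1 = complex.Re (f (P (iter c P x)) (iter c P x)).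
  by move=> c; rewrite /m -iterP (@iter_adj P Psa) addnS.
have mpos : forall j, 0 <= m j.
  move=> j; rewrite -(odd_double_half j) -addnn.
  case: (odd j); rewrite /= ?add0n ?add1n; [rewrite od; exact: gpos | rewrite ev; exact: fpos].
have lc : forall j, m j.+1 ^+ 2 <= m j * m j.+2.
  move=> j; rewrite -(odd_double_half j) -addnn.
  case: (odd j); rewrite /= ?add0n ?add1n.
  -
    set c := j./2.
    have e1 : m (c + c).+2 = complex.Re (f (P (iter c.+1 P x)) (iter c P x)).
      by rewrite /m -iterP (@iter_adj P Psa) !addnS.
    have e3 : m (c + c).+3 = complex.Re (f (P (iter c.+1 P x)) (iter c.+1 P x)).
      by rewrite -od addnS addSn.
    rewrite e1 e3 od.
    have h := FreCS gl gherm gpos (iter c.+1 P x) (iter c P x).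
    have h0 : 0 <= complex.Re (f (P (iter c.+1 P x)) (iter c P x)).
      by rewrite -e1; apply: mpos.
    have g1 := gpos (iter c.+1 P x); have g2 := gpos (iter c P x).
    rewrite -ler_sqr ?nnegrE ?mulr_ge0 ?sqrtr_ge0 // in h.
    by rewrite exprMn !sqr_sqrtr // mulrC in h.
  - set c := j./2.
    have e1 : m (c + c).+1 = complex.Re (f (iter c.+1 P x) (iter c P x)).
      by rewrite /m (@iter_adj P Psa) addnS.
    have e2 : m (c + c).+2 = q (iter c.+1 P x).
      by rewrite -ev addnS addSn.
    rewrite e1 e2 ev.
    have h := fReCS (iter c.+1 P x) (iter c P x).
    have h0 : 0 <= complex.Re (f (iter c.+1 P x) (iter c P x)).
      by rewrite -e1; apply: mpos.
    rewrite -ler_sqr ?nnegrE ?mulr_ge0 ?nA_ge0 // in h.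
    by rewrite exprMn !nA_sq mulrC in h.
have m0 : m 0%N = 1 by rewrite /m /= qx.
have := @mcc_real R m m0 mpos lc n.
by rewrite /m /= hXY.
Qed.

End Pair.

Lemma peri (X Y : H -> H) (Xlin : is_linear X) (Ylin : is_linear Y)
  (hXY : forall u v, f (X u) v = f u (Y v))
  (hYX : forall u v, f (Y u) v = f u (X v)) x n : q x = 1 ->
  Normc.normc (f (Y x) x) ^+ (2 * n) <=
  (complex.Re (f (iter n (X \o Y) x) x) + complex.Re (f (iter n (Y \o X) x) x)) / 2.
Proof.
move=> qx.
have h1 := FCS fl fherm fpos (Y x) x.
have h2 := FCS fl fherm fpos x (X x).
rewrite -hYX in h2.
rewrite qx mulr1 in h1; rewrite qx mul1r in h2.
have m1 := @mcc X Y Xlin Ylin hXY hYX x n qx.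
have m2 := @mcc Y X Ylin Xlin hYX hXY x n qx.
set a := Normc.normc (f (Y x) x) ^+ 2 in h1 h2.
have a0 : 0 <= a by apply: sqr_ge0.
have b1 : a ^+ n <= q (Y x) ^+ n by apply: lerXn2r; rewrite ?nnegrE ?fpos.
have b2 : a ^+ n <= q (X x) ^+ n by apply: lerXn2r; rewrite ?nnegrE ?fpos.
rewrite exprM -/a.
lra.
Qed.

Lemma bsum (I : Type) (r : seq I) (G : I -> H -> H) :
  (forall i, exists c, forall x, nA (G i x) <= c * nA x) ->
  exists c, forall x, nA (\sum_(i <- r) G i x) <= c * nA x.
Proof.
move=> hG; elim: r => [|a r [c hc]].
  by exists 0 => x; rewrite big_nil nA0 mul0r.
have [ca hca] := hG a.
exists (ca + c) => x; rewrite big_cons mulrDl.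
by apply: le_trans (nAtri _ _) _; apply: lerD.
Qed.

Lemma Asym w v : inner (A w) v = inner w (A v).
Proof.
rewrite -[inner (A w) v]/(f w v) fherm /innerA.
by rewrite [RHS](@inner_conj _ H).
Qed.

Lemma sharp_adj (T X : H -> H) : is_sharpA A T X ->
  forall u v, f (T u) v = f u (X v).
Proof.
move=> [_ [Ts [_ [hadj [hAX _]]]]] u v.
by rewrite /innerA Asym hadj -hAX -Asym.
Qed.

End Main.

Unset Implicit Arguments.

Lemma ReD (R : rcfType) (a b : R[i]) : complex.Re (a + b) = complex.Re a + complex.Re b.
Proof. by case: a => ? ?; case: b => ? ?. Qed.

Lemma Re_sum (R : rcfType) (I : Type) (r : seq I) (F : I -> R[i]) :
  complex.Re (\sum_(i <- r) F i) = \sum_(i <- r) complex.Re (F i).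
Proof. by apply: (big_morph (@complex.Re R)); [exact: ReD|]. Qed.

Lemma normc_sum (R : rcfType) (I : Type) (r : seq I) (F : I -> R[i]) :
  Normc.normc (\sum_(i <- r) F i) <= \sum_(i <- r) Normc.normc (F i).
Proof.
elim/big_rec2: _; first by rewrite Normc.normc0.
move=> i y1 y2 _ h; apply: le_trans (le_normcD _ _) _; exact: lerD.
Qed.

Theorem theorem3p12 (R : realType) (H : HilbertSpace R) (A : H -> H)
  (hA : positive_op A) (hA0 : exists x : H, A x <> 0)
  (k : nat) (hk : (1 <= k)%N) (S Ssh : 'I_k -> H -> H)
  (hS : forall i, in_BA A (S i)) (hSsh : forall i, is_sharpA A (S i) (Ssh i))
  (n : nat) (hn : (0 < n)%N) :
  numradA A (fun x => \sum_(i < k) S i x) ^+ (2 * n)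
  <= (k ^ (2 * n - 1))%:R / 2 *
     opnormA A (fun x => \sum_(i < k)
        (iter n (Ssh i \o S i) x + iter n (S i \o Ssh i) x)).
Proof.
set T := (fun x => \sum_(i < k) (iter n _ x + _)).
have Slin i : is_linear (S i) by case: (hS i) => [[]].
have Sb i : exists M, forall x, hnorm (S i x) <= M * hnorm x by case: (hS i) => [[_]].
have Shlin i : is_linear (Ssh i) by case: (hSsh i) => [[]].
have Shb i : exists M, forall x, hnorm (Ssh i x) <= M * hnorm x by case: (hSsh i) => [[_]].
have adj i u v : innerA A (S i u) v = innerA A u (Ssh i v) := sharp_adj hA (hSsh i) u v.
have adj' i u v : innerA A (Ssh i u) v = innerA A u (S i v).
  by rewrite (fherm hA v) -adj -fherm.
have cb (X Y : H -> H) : (exists M, forall x, hnorm (X x) <= M * hnorm x) ->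
    (exists M, forall x, hnorm (Y x) <= M * hnorm x) ->
    exists M, forall x, hnorm (X (Y x)) <= M * hnorm x.
  move=> [MX hX] [MY hY]; exists (`|MX| * MY) => x.
  apply: le_trans (hX _) _; apply: le_trans (_ : _ <= `|MX| * hnorm (Y x)) _.
    by apply: ler_wpM2r; [exact: sqrtr_ge0 | exact: ler_norm].
  by rewrite -mulrA; apply: ler_wpM2l => //; exact: hY.
have itb (Q : H -> H) c : 0 < c -> (forall x, normA A (Q x) <= c * normA A x) ->
    forall m x, normA A (iter m Q x) <= c ^+ m * normA A x.
  move=> c0 hQ; elim=> [|m IH] x /=; first by rewrite expr0 mul1r.
  apply: le_trans (hQ _) _; rewrite exprS -mulrA; apply: ler_wpM2l => //.
  exact: ltW.
have TB : exists C, forall x, normA A (T x) <= C * normA A x.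
  apply: (bsum hA) => i.
  have [c1 [c10 h1]] := abound hA (cb _ _ (Shb i) (Sb i)) (Psa (adj' i) (adj i)).
  have [c2 [c20 h2]] := abound hA (cb _ _ (Sb i) (Shb i)) (Psa (adj i) (adj' i)).
  exists (c1 ^+ n + c2 ^+ n) => x; rewrite mulrDl.
  apply: le_trans (nAtri hA _ _) _; apply: lerD; exact: itb.
have [C hC] := TB.
set ET := [set r : R | exists x, normA A x = 1 /\ r = normA A (T x)]%classic.
have ub : has_ubound ET by exists C => r [x [hx ->]]; rewrite -[C]mulr1 -hx; exact: hC.
have opge : forall x, normA A x = 1 -> normA A (T x) <= opnormA A T.
  by move=> x hx; apply: (ub_le_sup ub); exists x.
have op0 : 0 <= opnormA A T.
  have [[r [x [hx _]]]|hne] := pselect (ET !=set0)%classic.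
    exact: le_trans (nA_ge0 _ _) (opge x hx).
  by rewrite /opnormA -/ET sup_out // => -[].
apply: sup_pow_le; first by rewrite muln_gt0.
  by apply: mulr_ge0 => //; apply: divr_ge0.
move=> r [x [hx ->]] /=; split; first exact: normc_ge0.
have qx : complex.Re (innerA A x x) = 1 by rewrite -(nA_sq hA) hx expr1n.
rewrite (fsum hA).
apply: (@le_trans _ _ ((\sum_(i < k) Normc.normc (innerA A (S i x) x)) ^+ (2 * n))).
  apply: lerXn2r; rewrite ?nnegrE ?normc_ge0 ?sumr_ge0 //; last exact: normc_sum.
  by move=> i _; apply: normc_ge0.
have e2n : (2 * n = (2 * n - 1).+1)%N by rewrite subn1 prednK // muln_gt0.
rewrite [in X in X <= _]e2n.
have pm := @power_mean R k (fun i => Normc.normc (innerA A (S i x) x)) (2 * n - 1)%N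
  (fun i => normc_ge0 _).
apply: (le_trans pm).
rewrite -e2n natrX.
have hper : \sum_(i < k) Normc.normc (innerA A (S i x) x) ^+ (2 * n) <=
    complex.Re (innerA A (T x) x) / 2.
  rewrite /T (fsum hA) Re_sum mulr_suml; apply: ler_sum => i _.
  rewrite (fD hA) ReD.
  exact: (peri hA (Shlin i) (Slin i) (adj' i) (adj i) n qx).
have hre : complex.Re (innerA A (T x) x) <= opnormA A T.
  apply: le_trans (fReCS hA _ _) _; rewrite hx mulr1; exact: opge.
have k0 : 0 <= (k%:R : R) ^+ (2 * n - 1) by apply: exprn_ge0.
have hh := ler_wpM2l k0 hper.
apply: (le_trans hh).
set K := (k%:R : R) ^+ (2 * n - 1).
set Re := complex.Re (innerA A (T x) x).
rewrite (_ : K * (Re / 2) = K / 2 * Re); last by rewrite mulrCA mulrC.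
apply: ler_wpM2l; first by apply: divr_ge0.
exact: hre.
Qed.
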